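(* Let $n\ge 2$, $0<p<1$, and let $\{V^{(h)}\}_{h\ge 0}$ be a homogeneous Markov chain on $\mathcal V=\{v_1,\dots,v_n\}$ with transition matrix $Q$ given by $$Q_{ij}=\Pr[V^{(h)}=v_j\mid V^{(h-1)}=v_i]=\frac{1-p}{1-p^n}\,p^{\,(j-i-1)\bmod n},\qquad 1\le i,j\le n,$$ (so row $i$ is $\frac{1-p}{1-p^n}(\dots,p^{n-1},1,p,p^2,\dots)$ with the entry $1$ in column $i+1$ cyclically). Let $\pi^{(h)}$ be the probability vector of $V^{(h)}$ (with arbitrary initial distribution $\pi^{(0)}$), and let $\pi^{(\infty)}=(1/n,\dots,1/n)^\top$. Then $\pi^{(h)}\to\pi^{(\infty)}$ as $h\to\infty$, and for all $h\ge 0$, $$\|\pi^{(h)}-\pi^{(\infty)}\|_1\le \sqrt n\,|\lambda_1|^h,\qquad\text{where } |\lambda_1|=\frac{1-p}{\sqrt{1+p^2-2p\cos\frac{2\pi}{n}}}.$$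
   Context: $\|\cdot\|_1$ is the $\ell_1$ norm. This chain describes the sequence of non-skipped nodes on a fixed logical ring where each node is independently skipped with probability $p$. *)

(* Defs.v *)
From HB Require Import structures.
From mathcomp Require Import all_boot all_order all_algebra.
From mathcomp Require Import all_classical all_reals all_analysis.
Set Implicit Arguments. Unset Strict Implicit. Unset Printing Implicit Defensive.
Import Order.TTheory GRing.Theory Num.Theory.
Local Open Scope ring_scope.

(* Transition matrix of the skip chain on the ring v_1..v_n (0-indexed here:
   node i is v_{i+1}).  Q i j = (1-p)/(1-p^n) * p^((j - i - 1) mod n). *)
Definition skipQ (R : realType) (n : nat) (p : R) : 'M[R]_n :=
  \matrix_(i < n, j < n) ((1 - p) / (1 - p ^+ n) * p ^+ ((j + n - i.+1) %% n)).

Definition prob_vec (R : realType) (n : nat) (v : 'rV[R]_n) : Prop :=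
  (forall i, 0 <= v 0 i) /\ \sum_(i < n) v 0 i = 1.

Fixpoint distr (R : realType) (n : nat) (Q : 'M[R]_n) (pi0 : 'rV[R]_n)
  (h : nat) : 'rV[R]_n :=
  if h is h'.+1 then distr Q pi0 h' *m Q else pi0.

Definition unif (R : realType) (n : nat) : 'rV[R]_n := const_mx (n%:R^-1).

Definition l1norm (R : realType) (n : nat) (v : 'rV[R]_n) : R :=
  \sum_(i < n) `|v 0 i|.

(* Main.v *)
Require Import Defs.
From HB Require Import structures.
From mathcomp Require Import all_boot all_order all_algebra.
From mathcomp Require Import all_classical all_reals all_analysis.
From mathcomp Require Import ring lra zify.
Import Order.TTheory GRing.Theory Num.Theory.
Import numFieldNormedType.Exports.
Local Open Scope classical_set_scope.
Local Open Scope ring_scope.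

Lemma per_nat (R : realType) (f : R -> R) T : periodic f T ->
  forall x N, f (x + T * N%:R) = f x.
Proof.
move=> Pf x; elim=> [|N IH]; first by rewrite mulr0 addr0.
by rewrite -natr1 mulrDr mulr1 addrA Pf.
Qed.

Lemma nt_eq (R : realType) n : (0 < n)%N -> n%:R * (2 * pi / n%:R) = pi *+ 2 :> R.
Proof.
move=> n0; rewrite mulrC divfK ?pnatr_eq0 -?lt0n // mulr_natl //.
Qed.

Lemma tsum (R : realType) n m : (0 < n)%N ->
  \sum_(k < n) cos (m%:R * (2 * pi / n%:R) * k%:R) = if (n %| m)%N then n%:R else 0 :> R.
Proof.
move=> n0; set t := 2 * pi / n%:R.
have nt := @nt_eq R n n0.
have E : forall k, cos (m%:R * t * k%:R) = cos ((m %% n)%:R * t * k%:R).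
  move=> k; rewrite {1}(divn_eq m n) natrD natrM -[RHS](@per_nat R _ _ (@cosD2pi R) _ (m %/ n * k)).
  congr cos; rewrite natrM -nt /t; ring.
under eq_bigr do rewrite E.
rewrite /dvdn; case: eqP => [->|r0].
  under eq_bigr do rewrite mul0r mul0r cos0.
  by rewrite sumr_const card_ord.
set r := (m %% n)%N.
have rlt : (r < n)%N by rewrite ltn_pmod.
have rpos : (0 < r)%N by rewrite lt0n; apply/eqP.
set a := r%:R * t.
have pi0 : 0 < pi :> R := pi_gt0 R.
have a2 : a / 2 = pi * (r%:R / n%:R).
  rewrite /a /t; field; by rewrite pnatr_eq0 -lt0n.
have q0 : 0 < r%:R / n%:R :> R by rewrite divr_gt0 // ltr0n.
have q1 : r%:R / n%:R < 1 :> R by rewrite ltr_pdivrMr ?ltr0n // mul1r ltr_nat.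
have s0 : 0 < sin (a / 2).
  apply: sin_gt0_pi; rewrite a2; apply/andP; split; nra.
have tel : forall k, sin (a / 2) * 2 * cos (a * k%:R) =
   sin (a * k.+1%:R - a / 2) - sin (a * k%:R - a / 2).
  move=> k; have -> : a * k.+1%:R - a / 2 = a * k%:R + a / 2.
    by rewrite mulrS; field.
  rewrite sinD sinB; ring.
have H : sin (a / 2) * 2 * \sum_(k < n) cos (a * k%:R) = 0.
  rewrite big_distrr /=.
  under eq_bigr do rewrite tel.
  rewrite -(big_mkord xpredT (fun k => sin (a * k.+1%:R - a / 2) - sin (a * k%:R - a / 2))).
  rewrite telescope_sumr // mulr0 sub0r.
  have -> : a * n%:R - a / 2 = - (a / 2) + pi *+ 2 * r%:R.
    rewrite -nt /a /t; ring.
  by rewrite (@per_nat R _ _ (@sinD2pi R)) sinN subrr.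
move/eqP: H; rewrite mulf_eq0 mulf_eq0 (gt_eqF s0) /= pnatr_eq0 /=.
by move/eqP.
Qed.
Lemma tk_pi (R : realType) n k : (0 < n)%N -> (k.*2 <= n)%N ->
  0 <= 2 * (pi : R) / n%:R * k%:R <= pi.
Proof.
move=> n0 kn; have pi0 : 0 < pi :> R := pi_gt0 R.
have -> : 2 * pi / n%:R * k%:R = pi * ((k.*2)%:R / n%:R) :> R.
  rewrite -muln2 natrM; field; by rewrite pnatr_eq0 -lt0n.
have q0 : 0 <= (k.*2)%:R / n%:R :> R by rewrite divr_ge0.
have q1 : (k.*2)%:R / n%:R <= 1 :> R by rewrite ler_pdivrMr ?ltr0n // mul1r ler_nat.
apply/andP; split; nra.
Qed.

Lemma cos_le_half (R : realType) n k : (0 < n)%N -> (0 < k)%N -> (k.*2 <= n)%N ->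
  cos (2 * pi / n%:R * k%:R) <= cos (2 * pi / n%:R) :> R.
Proof.
move=> n0 k0 kn.
have t0 : 0 < 2 * pi / n%:R :> R by rewrite divr_gt0 ?ltr0n // mulr_gt0 // pi_gt0.
have H1 := @tk_pi R _ _ n0 kn.
have k1 : (1 <= k)%N by [].
have H2 : (1.*2 <= n)%N by rewrite (leq_trans _ kn) // leq_double.
have H3 := @tk_pi R _ _ n0 H2; rewrite mulr1 in H3.
rewrite leNgt ltr_cos ?inE /= ?in_itv //=.
rewrite -leNgt; have : 1 <= k%:R :> R by rewrite ler1n.
nra.
Qed.

Lemma cos_le (R : realType) n k : (0 < n)%N -> (0 < k < n)%N ->
  cos (2 * pi / n%:R * k%:R) <= cos (2 * pi / n%:R) :> R.
Proof.
move=> n0 /andP[k0 kn].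
case: (leqP k.*2 n) => h; first exact: cos_le_half.
have -> : cos (2 * pi / n%:R * k%:R) = cos (2 * pi / n%:R * (n - k)%:R) :> R.
  rewrite natrB ?(ltnW kn) // -cosN.
  have -> : 2 * pi / n%:R * (n%:R - k%:R) = - (2 * pi / n%:R * k%:R) + pi *+ 2 * 1%:R :> R.
    rewrite mulr1n; field; by rewrite pnatr_eq0 -lt0n.
  by rewrite (@per_nat R _ _ (@cosD2pi R)).
apply: cos_le_half => //; first by rewrite subn_gt0.
lia.
Qed.

Lemma cos_lt1 (R : realType) n : (1 < n)%N -> cos (2 * pi / n%:R) < 1 :> R.
Proof.
move=> n1; have n0 : (0 < n)%N by lia.
have t0 : 0 < 2 * pi / n%:R :> R by rewrite divr_gt0 ?ltr0n // mulr_gt0 // pi_gt0.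
have H2 : (1.*2 <= n)%N by [].
have H3 := @tk_pi R _ _ n0 H2; rewrite mulr1 in H3.
rewrite -[X in _ < X]cos0 ltr_cos // in_itv /= ?lexx ?pi_ge0 //.
Qed.

Lemma dvd_small n m : (0 < n)%N -> (m < n * 3)%N ->
  (n %| m)%N = [|| m == 0, m == n | m == n.*2]%N.
Proof.
move=> n0 m3; apply/idP/idP.
  case/dvdnP=> q mE; subst m.
  have q3 : (q < 3)%N by nia.
  by clear m3; case: q q3 => [|[|[|q]]] // _; rewrite ?mul0n ?mul1n ?mul2n eqxx ?orbT.
by case/or3P=> /eqP ->; rewrite ?dvdn0 ?dvdnn // -mul2n dvdn_mull.
Qed.

Lemma mod_lt2 n x : (x < n.*2)%N -> (x %% n = if (x < n)%N then x else x - n)%N.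
Proof.
move=> h; case: ifP => hx; first by rewrite modn_small.
have -> : x = (x - n + n)%N by rewrite subnK // leqNgt hx.
rewrite modnDr modn_small; first by rewrite addnK.
rewrite ltn_subLR; [lia | rewrite leqNgt hx //].
Qed.

Lemma ordS_val n (j : 'I_n) : (ordS j : nat) = (if (j.+1 < n)%N then j.+1 else 0)%N.
Proof.
rewrite /= mod_lt2; last by have := ltn_ord j; lia.
case: ifP => // _; have := ltn_ord j; lia.
Qed.

Lemma dvd0 n (j l : 'I_n) : (n %| j + n - l)%N = (j == l).
Proof.
have n0 : (0 < n)%N by apply: (leq_ltn_trans _ (ltn_ord j)).
have := ltn_ord j; have := ltn_ord l => hl hj.
rewrite dvd_small //; last by lia.
rewrite -val_eqE /=; apply/idP/idP.
  case/or3P=> /eqP h; apply/eqP; lia.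
move/eqP=> h; apply/or3P; apply: Or32; apply/eqP; lia.
Qed.

Lemma dvd1 n (j l : 'I_n) : (n %| j + n.+1 - l)%N = (l == ordS j).
Proof.
have n0 : (0 < n)%N by apply: (leq_ltn_trans _ (ltn_ord j)).
have := ltn_ord j; have := ltn_ord l => hl hj.
rewrite dvd_small //; last by lia.
rewrite -val_eqE /= mod_lt2; last lia.
case: ifP => hc; apply/idP/idP.
- case/or3P=> /eqP h; apply/eqP; lia.
- move/eqP=> h; apply/or3P; apply: Or32; apply/eqP; lia.
- case/or3P=> /eqP h; apply/eqP; lia.
- move/eqP=> h; apply/or3P; apply: Or33; apply/eqP; lia.
Qed.

Lemma dvd2 n (j l : 'I_n) : (n %| j + n - l.+1)%N = (j == ordS l).
Proof.
have n0 : (0 < n)%N by apply: (leq_ltn_trans _ (ltn_ord j)).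
have := ltn_ord j; have := ltn_ord l => hl hj.
rewrite dvd_small //; last by lia.
rewrite -val_eqE /= mod_lt2; last lia.
case: ifP => hc; apply/idP/idP.
- case/or3P=> /eqP h; apply/eqP; lia.
- move/eqP=> h; apply/or3P; apply: Or32; apply/eqP; lia.
- case/or3P=> /eqP h; apply/eqP; lia.
- move/eqP=> h; apply/or3P; apply: Or31; apply/eqP; lia.
Qed.

Lemma tsumZ (R : realType) n (x : R) m : (0 < n)%N -> x = m%:R - n%:R ->
  \sum_(k < n) cos (x * (2 * pi / n%:R) * k%:R) = if (n %| m)%N then n%:R else 0 :> R.
Proof.
move=> n0 ->; rewrite -tsum //; apply: eq_bigr => k _.
have nt := @nt_eq R n n0.
rewrite -(@per_nat R _ _ (@cosD2pi R) _ k); congr cos.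
rewrite -nt; ring.
Qed.

Lemma sum_if (R : realType) n (a : 'I_n) (F : 'I_n -> R) c :
  \sum_l F l * (if l == a then c else 0) = F a * c.
Proof.
rewrite (bigD1 a) //= eqxx big1 ?addr0 // => l /negbTE ->; by rewrite mulr0.
Qed.

Lemma wirt (R : realType) n (y : 'I_n -> R) : (1 < n)%N -> \sum_i y i = 0 ->
  \sum_i y i * y (ordS i) <= cos (2 * pi / n%:R) * \sum_i y i ^+ 2.
Proof.
move=> n1 ys; have n0 : (0 < n)%N by lia.
set t := 2 * pi / n%:R.
pose Cs (k : 'I_n) := \sum_j y j * cos (j%:R * t * k%:R).
pose Sn (k : 'I_n) := \sum_j y j * sin (j%:R * t * k%:R).
pose w (k : 'I_n) := cos t - cos (t * k%:R).
have A : forall k, Cs k ^+ 2 + Sn k ^+ 2 =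
   \sum_j \sum_l y j * y l * cos ((j%:R - l%:R) * t * k%:R).
  move=> k; rewrite /Cs /Sn !expr2 !big_distrl -big_split /=.
  apply: eq_bigr => j _; rewrite !big_distrr -big_split /=.
  apply: eq_bigr => l _.
  have -> : (j%:R - l%:R) * t * k%:R = j%:R * t * k%:R - l%:R * t * k%:R by ring.
  rewrite cosB; ring.
have B : 0 <= \sum_k w k * (Cs k ^+ 2 + Sn k ^+ 2).
  apply: sumr_ge0 => k _.
  have [k0|kpos] := eqVneq (k : nat) 0%N.
    have -> : Cs k = 0.
      rewrite /Cs -[RHS]ys; apply: eq_bigr => j _; by rewrite k0 mulr0 cos0 mulr1.
    have -> : Sn k = 0.
      rewrite /Sn big1 // => j _; by rewrite k0 mulr0 sin0 mulr0.
    by rewrite expr0n /= addr0 mulr0.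
  apply: mulr_ge0; last by rewrite addr_ge0 // sqr_ge0.
  rewrite /w subr_ge0; apply: cos_le => //.
  by rewrite lt0n kpos ltn_ord.
have D : forall j l : 'I_n, \sum_k w k * cos ((j%:R - l%:R) * t * k%:R) =
   cos t * (if j == l then n%:R else 0)
   - (if l == ordS j then n%:R else 0) / 2
   - (if j == ordS l then n%:R else 0) / 2.
  move=> j l.
  have E : forall k : 'I_n, w k * cos ((j%:R - l%:R) * t * k%:R) =
     cos t * cos ((j%:R - l%:R) * t * k%:R)
     - cos ((j%:R - l%:R + 1) * t * k%:R) / 2
     - cos ((j%:R - l%:R - 1) * t * k%:R) / 2.
    move=> k; rewrite /w.
    have -> : (j%:R - l%:R + 1) * t * k%:R = (j%:R - l%:R) * t * k%:R + t * k%:R by ring.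
    have -> : (j%:R - l%:R - 1) * t * k%:R = (j%:R - l%:R) * t * k%:R - t * k%:R by ring.
    by rewrite cosD cosB; field.
  rewrite (eq_bigr _ (fun k _ => E k)).
  rewrite !sumrB -!mulr_suml -big_distrr /=.
  have hl := ltn_ord l.
  rewrite /t (@tsumZ R n (j%:R - l%:R) (j + n - l)%N n0); last first.
    rewrite natrB; last lia.
    rewrite natrD; ring.
  rewrite (@tsumZ R n (j%:R - l%:R + 1) (j + n.+1 - l)%N n0); last first.
    rewrite natrB; last lia.
    rewrite -addn1 !natrD; ring.
  rewrite (@tsumZ R n (j%:R - l%:R - 1) (j + n - l.+1)%N n0); last first.
    rewrite natrB; last lia.
    rewrite -addn1 !natrD; ring.
  by rewrite dvd0 dvd1 dvd2.
have C : \sum_k w k * (Cs k ^+ 2 + Sn k ^+ 2) =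
   \sum_j \sum_l y j * y l * \sum_k w k * cos ((j%:R - l%:R) * t * k%:R).
  under eq_bigr do rewrite A big_distrr /=.
  rewrite exchange_big /=; apply: eq_bigr => j _.
  under eq_bigr do rewrite big_distrr /=.
  rewrite exchange_big /=; apply: eq_bigr => l _.
  rewrite big_distrr /=; apply: eq_bigr => k _; ring.
have F : forall j l : 'I_n, y j * y l * (cos t * (if j == l then n%:R else 0)
   - (if l == ordS j then n%:R else 0) / 2
   - (if j == ordS l then n%:R else 0) / 2) =
   y j * y l * (if l == j then cos t * n%:R else 0)
   - y j * y l * (if l == ordS j then n%:R / 2 else 0)
   - y l * y j * (if j == ordS l then n%:R / 2 else 0).
  move=> j l; rewrite (eq_sym l j).
  case: (j == l); case: (l == ordS j); case: (j == ordS l); rewrite ?mulr0 ?mul0r; ring.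
have G : \sum_j \sum_l y j * y l * \sum_k w k * cos ((j%:R - l%:R) * t * k%:R) =
   n%:R * (cos t * \sum_i y i ^+ 2 - \sum_i y i * y (ordS i)).
  under eq_bigr => j _ do under eq_bigr => l _ do rewrite D F.
  under eq_bigr => j _ do rewrite !sumrB !sum_if.
  rewrite !sumrB.
  rewrite [X in _ - _ - X = _]exchange_big /=.
  under [X in _ - _ - X = _]eq_bigr => l _ do rewrite sum_if.
  rewrite -!mulr_suml; under [in RHS]eq_bigr do rewrite expr2.
  by field.
move: B; rewrite C G pmulr_rge0 ?ltr0n // subr_ge0 //.
Qed.

Lemma exp_rel n (i j : 'I_n) : i != j ->
  (((if (j.+1 < n)%N then j.+1 else 0) + n - i.+1) %% n = ((j + n - i.+1) %% n).+1)%N.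
Proof.
move=> /negP ij; have hi := ltn_ord i; have hj := ltn_ord j.
have ij' : (i : nat) <> j by move=> h; apply: ij; apply/eqP/val_inj.
case: ifP => h1; rewrite !mod_lt2; try lia;
  repeat (case: ifP => ?); lia.
Qed.

Lemma Qshift (R : realType) n (p : R) (i j : 'I_n) : 0 < p < 1 ->
  skipQ n p i (ordS j) - p * skipQ n p i j = if i == j then 1 - p else 0.
Proof.
move=> /andP[p0 p1]; have hi := ltn_ord i; have hj := ltn_ord j.
have pn : 1 - p ^+ n != 0.
  rewrite subr_eq0 eq_sym; apply/negP => /eqP h.
  have : p ^+ n < 1 by rewrite exprn_ilt1 // ?ltW // -lt0n; lia.
  by rewrite h ltxx.
rewrite !mxE ordS_val.
case: eqP => [<-|/eqP ij].
  have -> : (((if (i.+1 < n)%N then i.+1 else 0) + n - i.+1) %% n = 0)%N.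
    case: ifP => h; first by rewrite addKn modnn.
    have -> : (0 + n - i.+1 = 0)%N by lia.
    by rewrite mod0n.
  have -> : ((i + n - i.+1) %% n = n.-1)%N.
    rewrite modn_small; lia.
  rewrite expr0 mulr1 mulrCA -exprS prednK; last lia.
  by rewrite -{1}(mulr1 ((1-p)/(1-p^+n))) -mulrBr divfK.
rewrite exp_rel // exprS; ring.
Qed.

Lemma shift_rel (R : realType) n (p : R) (x : 'rV[R]_n) j : 0 < p < 1 ->
  (x *m skipQ n p) 0 (ordS j) - p * (x *m skipQ n p) 0 j = (1 - p) * x 0 j.
Proof.
move=> hp; rewrite !mxE mulr_sumr -sumrB.
under eq_bigr => i _ do rewrite mulrCA -mulrBr Qshift //.
by rewrite sum_if mulrC.
Qed.

Lemma sumS (R : realType) n (F : 'I_n -> R) : \sum_i F (ordS i) = \sum_i F i.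
Proof. by rewrite [RHS](reindex_inj (@ordS_inj n)). Qed.

Lemma sum_pres (R : realType) n (p : R) (x : 'rV[R]_n) : 0 < p < 1 ->
  \sum_j (x *m skipQ n p) 0 j = \sum_j x 0 j.
Proof.
move=> hp; set y := x *m skipQ n p.
have H : \sum_j (y 0 (ordS j) - p * y 0 j) = \sum_j (1 - p) * x 0 j.
  by apply: eq_bigr => j _; rewrite shift_rel.
move: H; rewrite sumrB (@sumS _ _ (fun j => y 0 j)) -!mulr_sumr.
have : 1 - p != 0 by case/andP: hp => ? ?; rewrite subr_eq0 eq_sym lt_eqF.
move=> h1 H; apply: (mulfI h1); rewrite -H; ring.
Qed.

Lemma contr (R : realType) n (p : R) (x : 'rV[R]_n) : (1 < n)%N -> 0 < p < 1 ->
  \sum_j x 0 j = 0 ->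
  (1 + p ^+ 2 - 2 * p * cos (2 * pi / n%:R)) * \sum_j (x *m skipQ n p) 0 j ^+ 2
  <= (1 - p) ^+ 2 * \sum_j x 0 j ^+ 2.
Proof.
move=> n1 hp xs; set y := x *m skipQ n p.
have ys : \sum_j y 0 j = 0 by rewrite sum_pres.
have W := @wirt R n (fun j => y 0 j) n1 ys.
have H : \sum_j (y 0 (ordS j) - p * y 0 j) ^+ 2 = (1 - p) ^+ 2 * \sum_j x 0 j ^+ 2.
  rewrite mulr_sumr; apply: eq_bigr => j _; by rewrite shift_rel // exprMn.
have H2 : \sum_j (y 0 (ordS j) - p * y 0 j) ^+ 2 =
   (1 + p ^+ 2) * \sum_j y 0 j ^+ 2 - 2 * p * \sum_j y 0 j * y 0 (ordS j).
  have E : forall j, (y 0 (ordS j) - p * y 0 j) ^+ 2 =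
     y 0 (ordS j) ^+ 2 + (p ^+ 2 * y 0 j ^+ 2 - 2 * p * (y 0 j * y 0 (ordS j))).
    move=> j; ring.
  rewrite (eq_bigr _ (fun j _ => E j)) big_split /= (@sumS _ _ (fun j => y 0 j ^+ 2)) sumrB -!mulr_sumr; ring.
rewrite -H H2; case/andP: hp => p0 p1; nra.
Qed.

Lemma uQ (R : realType) n (p : R) : (0 < n)%N -> 0 < p < 1 ->
  unif R n *m skipQ n p = unif R n.
Proof.
move=> n0 hp; set y := unif R n *m skipQ n p.
pose z j := y 0 j - n%:R^-1.
have Z : forall j, z (ordS j) = p * z j.
  move=> j; have := @shift_rel R n p (unif R n) j hp; rewrite -/y /z.
  have -> : unif R n 0 j = n%:R^-1 by rewrite mxE.
  move: (y 0 (ordS j)) (y 0 j) => a b h.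
  apply/eqP; rewrite -subr_eq0; apply/eqP.
  transitivity (a - p * b - (1 - p) * n%:R^-1); first ring.
  by rewrite h subrr.
have S : \sum_j z j ^+ 2 = p ^+ 2 * \sum_j z j ^+ 2.
  rewrite -[LHS](@sumS _ _ (fun j => z j ^+ 2)) mulr_sumr; apply: eq_bigr => j _.
  by rewrite Z exprMn.
have S0 : \sum_j z j ^+ 2 = 0.
  have : (1 - p ^+ 2) * \sum_j z j ^+ 2 = 0 by rewrite mulrBl mul1r -S subrr.
  case/andP: hp => p0 p1.
  move/eqP; rewrite mulf_eq0 => /orP[|/eqP //].
  rewrite subr_eq0 => /eqP h; exfalso; nra.
apply/rowP => j.
have := psumr_eq0P (F := fun i => z i ^+ 2) (fun i _ => sqr_ge0 (z i)) S0; move=> /(_ j isT).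
move/eqP; rewrite sqrf_eq0 /z subr_eq0 => /eqP ->.
by rewrite /unif mxE.
Qed.

Lemma cs (R : realType) n (a : 'I_n -> R) :
  (\sum_i a i) ^+ 2 <= n%:R * \sum_i a i ^+ 2.
Proof.
apply: (le_trans (y := \sum_i \sum_j (a i ^+ 2 + a j ^+ 2) / 2)).
  rewrite expr2 big_distrl /=; apply: ler_sum => i _.
  rewrite big_distrr /=; apply: ler_sum => j _.
  have := sqr_ge0 (a i - a j); nra.
under eq_bigr => i _ do rewrite -mulr_suml big_split /= sumr_const card_ord.
rewrite -mulr_suml big_split /= sumr_const card_ord sumrMnl.
rewrite -mulr2n; set S := \sum_(i < n) _.
by rewrite -[S *+ n *+ 2]mulr_natr mulfK ?pnatr_eq0 // mulr_natl.
Qed.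

Lemma mx_le_l1 (R : realType) n (M : 'rV[R]_n) : `|M| <= l1norm M.
Proof.
have L0 : 0 <= l1norm M by rewrite /l1norm sumr_ge0.
have -> : `|M| = mx_norm M by [].
rewrite mx_normrE.
elim/big_ind: _ => //.
  by move=> x y hx hy; rewrite ge_max hx hy.
case=> i j _ /=; rewrite (ord1 i) /l1norm (bigD1 j) //= lerDl; apply: sumr_ge0 => k _; exact: normr_ge0.
Qed.

Theorem lemma3 (R : realType) (n : nat) (p : R) (pi0 : 'rV[R]_n) :
  (2 <= n)%N -> 0 < p -> p < 1 -> prob_vec pi0 ->
  (distr (skipQ n p) pi0 @ \oo --> unif R n) /\
  (forall h : nat,
     l1norm (distr (skipQ n p) pi0 h - unif R n) <=
     Num.sqrt (n%:R) *
       ((1 - p) / Num.sqrt (1 + p ^+ 2 - 2 * p * cos (2 * pi / n%:R))) ^+ h).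
Proof.
move=> n2 p0 p1 [pi_nn pi_s].
have n1 : (1 < n)%N by [].
have n0 : (0 < n)%N by lia.
have hp : 0 < p < 1 by rewrite p0 p1.
have ct := @cos_lt1 R n n1.
have ctg := @cos_geN1 R (2 * pi / n%:R).
set Q := skipQ n p.
set K := 1 + p ^+ 2 - 2 * p * cos (2 * pi / n%:R).
have K1 : (1 - p) ^+ 2 < K by rewrite /K; nra.
have K0 : 0 < K by apply: le_lt_trans K1; apply: sqr_ge0.
have sK0 : 0 < Num.sqrt K by rewrite sqrtr_gt0.
set lam := (1 - p) / Num.sqrt K.
have lam0 : 0 <= lam by rewrite /lam divr_ge0 ?sqrtr_ge0 // subr_ge0 ltW.
have lam1 : lam < 1.
  rewrite /lam ltr_pdivrMr // mul1r.
  have -> : 1 - p = Num.sqrt ((1 - p) ^+ 2) by rewrite sqrtr_sqr ger0_norm // subr_ge0 ltW.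
  by rewrite ltr_sqrt.
have lam2 : lam ^+ 2 = (1 - p) ^+ 2 / K by rewrite /lam expr_div_n sqr_sqrtr // ltW.
pose e h := distr Q pi0 h - unif R n.
have eS : forall h, e h.+1 = e h *m Q.
  by move=> h; rewrite /e /= mulmxBl uQ.
have es : forall h, \sum_j e h 0 j = 0.
  elim=> [|h IH]; last by rewrite eS sum_pres.
  rewrite /e /=; under eq_bigr do rewrite !mxE.
  rewrite sumrB pi_s sumr_const card_ord -[n%:R^-1 *+ n]mulr_natr mulVf ?subrr //.
  by rewrite pnatr_eq0 -lt0n.
have sq_step : forall h, \sum_j e h.+1 0 j ^+ 2 <= lam ^+ 2 * \sum_j e h 0 j ^+ 2.
  move=> h; rewrite lam2 mulrAC ler_pdivlMr // mulrC eS.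
  exact: contr.
have sq0 : \sum_j e 0 0 j ^+ 2 <= 1.
  have E : forall j, e 0 0 j = pi0 0 j - n%:R^-1 by move=> j; rewrite /e !mxE.
  have -> : \sum_j e 0 0 j ^+ 2 = \sum_j e 0 0 j * pi0 0 j.
    transitivity (\sum_j (e 0 0 j * pi0 0 j - n%:R^-1 * e 0 0 j)).
      by apply: eq_bigr => j _; rewrite E; ring.
    by rewrite sumrB -mulr_sumr es mulr0 subr0.
  rewrite -pi_s; apply: ler_sum => j _.
  have pj : pi0 0 j <= 1 by rewrite -pi_s (bigD1 j) //= lerDl sumr_ge0.
  have ni : 0 <= n%:R^-1 :> R by rewrite invr_ge0.
  have := pi_nn j; rewrite E; nra.
have sqh : forall h, \sum_j e h 0 j ^+ 2 <= (lam ^+ 2) ^+ h.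
  elim=> [|h IH]; first by rewrite expr0.
  apply: (le_trans (sq_step h)); rewrite [(lam ^+ 2) ^+ h.+1]exprS ler_wpM2l // sqr_ge0 //.
have l1b : forall h, l1norm (e h) <= Num.sqrt n%:R * lam ^+ h.
  move=> h; have L0 : 0 <= l1norm (e h) by rewrite /l1norm sumr_ge0.
  rewrite -(ger0_norm L0) -sqrtr_sqr -(ger0_norm (exprn_ge0 h lam0)) -sqrtr_sqr.
  rewrite -sqrtrM ?ler0n // ler_wsqrtr //.
  apply: (le_trans (@cs R n _)); rewrite ler_wpM2l ?ler0n //.
  under eq_bigr do rewrite real_normK ?num_real //.
  by rewrite -exprM mulnC exprM.
split; last exact: l1b.
apply/cvgrPdist_le => eps eps0.
have sn0 : 0 < Num.sqrt n%:R :> R by rewrite sqrtr_gt0 ltr0n.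
have lamn : `|lam| < 1 by rewrite ger0_norm.
have hn := cvgr0_norm_le (fun h => lam ^+ h) (cvg_expr lamn) _ (divr_gt0 eps0 sn0).
near=> h.
have hh : `|lam ^+ h| <= eps / Num.sqrt n%:R by near: h; exact: hn.
rewrite distrC; apply: (le_trans (@mx_le_l1 R n _)).
apply: (le_trans (l1b h)).
rewrite mulrC -ler_pdivlMr //.
by apply: le_trans hh; rewrite real_ler_norm // num_real.
Unshelve. all: end_near.
Qed.
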